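(* Let $(G;+,\cdot)$ be a finite field of order $q$. If $n > \max(q,3)$ and $f \colon G^n \to G$ is not affine, then there exists a 2-element subset $I \subseteq \{1,\dots,n\}$ such that the identification minor $f_I$ is not affine.
   Context: A function $f\colon G^n\to G$ is affine over the field if $f(x_1,\dots,x_n) = a_1x_1+\dots+a_nx_n+c$ for some $a_i,c\in G$. Identification minor: for $I=\{i,j\}$, $i<j$, $f_I\colon G^{n-1}\to G$ is $f_I(x_1,\dots,x_{n-1}) = f(x_1,\dots,x_{j-1},x_i,x_j,\dots,x_{n-1})$ (the $i$-th and $j$-th arguments of $f$ are identified). *)

(* Defs.v *)
From HB Require Import structures.
From mathcomp Require Import all_boot all_order all_algebra all_fingroup all_field.
Set Implicit Arguments. Unset Strict Implicit. Unset Printing Implicit Defensive.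
Import GRing.Theory.
Local Open Scope ring_scope.

Definition affine (G : fieldType) (n : nat) (f : ('I_n -> G) -> G) : Prop :=
  exists (a : 'I_n -> G) (c : G), forall x : 'I_n -> G,
    f x = \sum_(k < n) a k * x k + c.

(* Identification minor f_I for I = {i, j}, i < j (0-based indices in 'I_m.+2;
   arity n = m.+2 >= 2 so that the (n-1)-ary minor has index type 'I_m.+1
   and inord is available).
   f_I(y_0,...,y_{m-1}) = f(y_0,...,y_{j-1}, y_i, y_j, ..., y_{m-1}). *)

Definition ident_minor (G : Type) (m : nat) (f : ('I_m.+2 -> G) -> G)
  (i j : 'I_m.+2) : ('I_m.+1 -> G) -> G :=
  fun y => f (fun k => if (k < j)%N then y (inord k)
                   else if (k == j :> nat) then y (inord i)
                   else y (inord k.-1)).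

(* Main.v *)
Require Import Defs.
From HB Require Import structures.
From mathcomp Require Import all_boot all_order all_algebra all_fingroup all_field.
From mathcomp Require Import ring zify.
From Stdlib Require Import Classical FunctionalExtensionality.
Set Implicit Arguments. Unset Strict Implicit. Unset Printing Implicit Defensive.
Import GRing.Theory.

Section Aux.
Local Open Scope ring_scope.
Variable G : fieldType.

Definition Pid n (f : ('I_n -> G) -> G) (i j : 'I_n) :=
  forall (u v : 'I_n -> G) (t : G), u i = u j -> v i = v j ->
    f (fun k => u k + t * v k) = f u + t * (f v - f (fun _ => 0)).

Lemma affine_lin n (a : 'I_n -> G) (c : G) (u v : 'I_n -> G) (t : G) :
  \sum_(k < n) a k * (u k + t * v k) + c =
  (\sum_(k < n) a k * u k + c) + t * ((\sum_(k < n) a k * v k + c) -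
     (\sum_(k < n) a k * 0 + c)).
Proof.
rewrite [X in _ - (X + c)]big1; last by move=> k _; rewrite mulr0.
rewrite (eq_bigr (fun k => a k * u k + t * (a k * v k))); last first.
  by move=> k _; ring.
rewrite big_split /= -mulr_sumr; ring.
Qed.

Lemma minor_eval m (f : ('I_m.+2 -> G) -> G) (i j : 'I_m.+2) (z : 'I_m.+2 -> G) :
  (i < j)%N -> z i = z j ->
  f z = ident_minor f i j (fun k : 'I_m.+1 => z (if (k < j)%N then inord k else inord k.+1)).
Proof.
move=> hij hz; rewrite /ident_minor; congr f; apply: functional_extensionality => k.
have hk := ltn_ord k; have hj := ltn_ord j.
case: (ltngtP k j) => hkj.
- rewrite inordK; last by lia.
  rewrite ifT; [congr z; apply: val_inj; rewrite /= inordK //; lia | lia].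
- rewrite inordK; last by lia.
  rewrite ifF; [congr z; apply: val_inj; rewrite /= inordK //; lia | lia].
- rewrite inordK; last by lia.
  rewrite ifT; [ | lia].
  rewrite inord_val.
  by rewrite hz; congr z; apply: val_inj.
Qed.

Lemma Pid_of_minor m (f : ('I_m.+2 -> G) -> G) (i j : 'I_m.+2) :
  (i < j)%N -> affine (ident_minor f i j) -> Pid f i j.
Proof.
move=> hij [a [c Ha]] u v t hu hv.
rewrite (minor_eval f hij hu) (minor_eval f hij hv) (@minor_eval _ f i j (fun _ => 0) hij erefl).
rewrite (@minor_eval _ f i j (fun k => u k + t * v k) hij); last by rewrite hu hv.
rewrite !Ha; exact: affine_lin.
Qed.

Lemma pigeon (T : finType) n (x : 'I_n -> T) : (#|T| < n)%N -> exists i j : 'I_n, (i < j)%N /\ x i = x j.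
Proof.
move=> hn; apply: NNPP => H.
have inj : injective x.
  move=> i j hij; apply/val_inj/eqP; case: (ltngtP i j) => // h; exfalso; apply: H.
    by exists i, j.
  by exists j, i.
by move: (leq_card x inj); rewrite card_ord leqNgt hn.
Qed.

Lemma affine_of_id n (f : ('I_n -> G) -> G) :
  (forall (u v : 'I_n -> G) t, f (fun k => u k + t * v k) = f u + t * (f v - f (fun _ => 0))) ->
  affine f.
Proof.
move=> Hf.
pose e (o : 'I_n) := fun k : 'I_n => if k == o then (1 : G) else 0.
exists (fun o => f (e o) - f (fun _ => 0)), (f (fun _ => 0)) => x.
pose xr r := fun k : 'I_n => if (k < r)%N then x k else 0.
suff H : forall r, f (xr r) = \sum_(k < n) (f (e k) - f (fun _ => 0)) * xr r k + f (fun _ => 0).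
  have -> : x = xr n by apply: functional_extensionality => k; rewrite /xr ltn_ord.
  exact: H.
elim=> [|r IH].
  rewrite big1 ?add0r; last by move=> k _; rewrite /xr ltn0 mulr0.
  by congr f; apply: functional_extensionality => k; rewrite /xr ltn0.
case: (ltnP r n) => hr; last first.
  have E : xr r.+1 = xr r.
    apply: functional_extensionality => k; rewrite /xr; have := ltn_ord k => hk.
    by rewrite ifT ?ifT //; lia.
  by rewrite E.
pose o := Ordinal hr.
have E : xr r.+1 = (fun k => xr r k + x o * e o k).
  apply: functional_extensionality => k; rewrite /xr /e.
  case: (ltngtP k r) => h.
  - rewrite ifT; last by lia.
    have -> : (k == o) = false by apply/eqP => /(congr1 val) /=; lia.
    by rewrite mulr0 addr0.
  - rewrite ifF; last by lia.
    have -> : (k == o) = false by apply/eqP => /(congr1 val) /=; lia.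
    by rewrite mulr0 addr0.
  - have -> : k = o by apply: val_inj.
    by rewrite ifT ?eqxx ?mulr1 ?add0r //; lia.
rewrite E Hf IH.
rewrite [in RHS](eq_bigr (fun k => (f (e k) - f (fun _ => 0)) * xr r k +
   (f (e k) - f (fun _ => 0)) * (x o * e o k))); last by move=> k _ /=; ring.
have S : \sum_(k < n) (f (e k) - f (fun _ => 0)) * (x o * e o k) =
    (f (e o) - f (fun _ => 0)) * x o.
  rewrite (bigD1 o) //= big1 ?addr0; last first.
    by move=> k hk; rewrite /e /= (negbTE hk) !mulr0.
  by rewrite /e eqxx mulr1.
rewrite big_split /= S; ring.
Qed.

End Aux.

Local Open Scope ring_scope.
(* n = m.+2 is the arity; n > max(q,3) forces n >= 4, so this is no restriction. *)
Theorem mainTheorem13 (G : finFieldType) (m : nat)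
  (Hn : (maxn #|G| 3 < m.+2)%N) (f : ('I_m.+2 -> G) -> G) :
  ~ affine f ->
  exists i j : 'I_m.+2, (i < j)%N /\ ~ affine (ident_minor f i j).
Proof.
move=> Hnaff; apply: NNPP => Hno.
have HP : forall i j : 'I_m.+2, (i < j)%N -> Pid f i j.
  move=> i j hij; apply (Pid_of_minor hij); apply: NNPP => hna; apply: Hno.
  by exists i, j; split; [exact: hij | exact: hna].
apply: Hnaff.
have hm : (3 < m.+2)%N by move: Hn; rewrite gtn_max => /andP[].
have hq : (#|G| < m.+2)%N by move: Hn; rewrite gtn_max => /andP[].
pose o0 : 'I_m.+2 := inord 0.
pose o1 : 'I_m.+2 := inord 1.
pose o2 : 'I_m.+2 := inord 2.
pose o3 : 'I_m.+2 := inord 3.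
have v0 : val o0 = 0%N by rewrite /= inordK.
have v1 : val o1 = 1%N by rewrite /= inordK //; lia.
have v2 : val o2 = 2%N by rewrite /= inordK //; lia.
have v3 : val o3 = 3%N by rewrite /= inordK //; lia.
have ne : forall a b : 'I_m.+2, val a <> val b -> (a == b) = false.
  by move=> a b h; apply/eqP => /(congr1 val).
have n01 : (o0 == o1) = false by apply: ne; rewrite v0 v1.
have n10 : (o1 == o0) = false by apply: ne; rewrite v0 v1.
have l01 : (o0 < o1)%N by rewrite v0 v1.
have l23 : (o2 < o3)%N by rewrite v2 v3.
pose Pi (x : 'I_m.+2 -> G) := fun k => if k == o1 then x o0 else x k.
pose L x := f (Pi x).
have Lid : forall (u v : 'I_m.+2 -> G) t,
    L (fun k => u k + t * v k) = L u + t * (L v - L (fun _ => 0)).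
  move=> u v t; rewrite /L.
  have -> : Pi (fun k => u k + t * v k) = (fun k => Pi u k + t * Pi v k).
    by apply: functional_extensionality => k; rewrite /Pi; case: eqP.
  have -> : Pi (fun _ => 0) = (fun _ => 0).
    by apply: functional_extensionality => k; rewrite /Pi; case: eqP.
  by apply: (HP o0 o1 l01); rewrite /Pi eqxx n01.
pose g x := f x - L x.
have g0 : forall x, x o0 = x o1 -> g x = 0.
  move=> x hx; rewrite /g /L.
  have -> : Pi x = x.
    by apply: functional_extensionality => k; rewrite /Pi; case: eqP => [->|].
  by rewrite subrr.
have gz : g (fun _ => 0) = 0 by apply: g0.
have Pg : forall i j : 'I_m.+2, (i < j)%N -> forall (u v : 'I_m.+2 -> G) t,
    u i = u j -> v i = v j ->
    g (fun k => u k + t * v k) = g u + t * (g v - g (fun _ => 0)).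
  move=> i j hij u v t hu hv; rewrite /g (HP i j hij u v t hu hv) Lid; ring.
pose e0 := fun k : 'I_m.+2 => if k == o0 then (1:G) else 0.
pose lam := g e0.
have main : forall x, g x = lam * (x o0 - x o1).
  move=> x; have [i [j [hij hx]]] := pigeon x hq.
  case E: ((val i == 0%N) && (val j == 1%N)).
    move/andP: E => [/eqP hi /eqP hj].
    have ei : i = o0 by apply: val_inj; rewrite v0.
    have ej : j = o1 by apply: val_inj; rewrite v1.
    by rewrite g0 -?ei -?ej ?hx ?subrr ?mulr0.
  pose d := if val i == 0%N then (fun k => if k == o1 then (0:G) else 1) else e0.
  have d0 : d o0 = 1 by rewrite /d; case: ifP => _; rewrite /e0 ?n01 ?eqxx.
  have d1 : d o1 = 0 by rewrite /d; case: ifP => _; rewrite /e0 ?n10 ?eqxx.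
  have dij : d i = d j.
    rewrite /d /e0; case: ifP => /eqP hi.
      have hj : val j <> 1%N by move=> hj; move: E; rewrite hi hj.
      rewrite (ne i o1) ?(ne j o1) //; rewrite v1 /=; move: hi hj => /= hi hj; lia.
    rewrite (ne i o0) ?(ne j o0) //; rewrite v0 /=; move: hi => /= hi; lia.
  have d23 : d o2 = d o3.
    by rewrite /d /e0; case: ifP => _; rewrite !ne // ?v0 ?v1 ?v2 ?v3.
  pose t := x o0 - x o1.
  pose x' := fun k => x k - t * d k.
  have Ex : x = fun k => x' k + t * d k.
    by apply: functional_extensionality => k; rewrite /x' subrK.
  have gd : g d = lam.
    have Ed : d = fun k => (fun k => d k - e0 k) k + 1 * e0 k.
      by apply: functional_extensionality => k; rewrite mul1r subrK.
    rewrite Ed (Pg o2 o3 l23); last 2 first.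
    - by rewrite d23 /e0 !ne // ?v0 ?v2 ?v3.
    - by rewrite /e0 !ne // ?v0 ?v2 ?v3.
    rewrite g0 ?gz; last by rewrite d0 d1 /e0 eqxx n10 subrr subr0.
    by rewrite /lam; ring.
  rewrite Ex (Pg i j hij); last 2 first.
  - by rewrite /x' hx dij.
  - exact: dij.
  have hx' : x' o0 = x' o1 by rewrite /x' d0 d1 /t; ring.
  rewrite g0 ?gz ?gd // d0 d1 hx'; ring.
apply: affine_of_id => u v t.
have fE : forall x, f x = L x + lam * (x o0 - x o1) by move=> x; rewrite -main /g; ring.
rewrite !fE Lid; ring.
Qed.
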